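(* Let $m>n$ be positive integers and let $G[V_1,V_2]$ be a balanced bipartite graph on $2(m+n-1)$ vertices (so $|V_1|=|V_2|=m+n-1$) with minimum degree $\delta(G)>\frac{3}{4}(m+n-1)$. Suppose a red-blue coloring of the edges of $G$ has no blue connected $n$-matching. Suppose further that $\mathcal{B}$ is a largest blue component of $G$ (one with the maximum number of vertices among all blue components) and that $|V(\mathcal{B})\cap V_i|\ge n$ for each $i\in\{1,2\}$. Let $S$ be a minimum vertex cover of $\mathcal{B}$. Then there is a red component of $G$ containing $V(\mathcal{B})\setminus S$.
   Context: For a red-blue edge coloring of $G$, the red subgraph (resp. blue subgraph) is the spanning subgraph of $G$ consisting of all red (resp. blue) edges; a red (blue) component is a connected component of it. A connected $k$-matching in a graph $H$ is a matching with $k$ edges all lying in a single connected component of $H$; a blue connected $k$-matching is a connected $k$-matching in the blue subgraph. A vertex cover of a graph is a set of vertices containing at least one endpoint of every edge; a minimum vertex cover is one of smallest size. *)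

(* Defs.v *)
From mathcomp Require Import all_boot.
Set Implicit Arguments. Unset Strict Implicit. Unset Printing Implicit Defensive.

Section Defs.
Variable T : finType.

Definition bipartite_graph (adj : rel T) (V1 V2 : {set T}) : Prop :=
  [/\ symmetric adj, irreflexive adj,
      [disjoint V1 & V2], V1 :|: V2 = setT &
      forall x y, adj x y -> (x \in V1) && (y \in V2) || (x \in V2) && (y \in V1)].

Definition deg (adj : rel T) (x : T) : nat := #|[set y | adj x y]|.

(* A red-blue colouring: col x y = true means the edge xy is red;
   it must not depend on the orientation of the edge. *)
Definition coloring (adj : rel T) (col : T -> T -> bool) : Prop :=
  forall x y, adj x y -> col x y = col y x.

Definition red_rel (adj : rel T) (col : T -> T -> bool) : rel T :=
  [rel x y | adj x y && col x y].
Definition blue_rel (adj : rel T) (col : T -> T -> bool) : rel T :=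
  [rel x y | adj x y && ~~ col x y].

Definition component (H : rel T) (v : T) : {set T} := [set u | connect H v u].

Definition is_component (H : rel T) (C : {set T}) : Prop :=
  exists v, C = component H v.

Definition connected_matching (H : rel T) (k : nat) : Prop :=
  exists M : {set T * T},
    [/\ #|M| = k,
        forall e, e \in M -> H e.1 e.2,
        forall e f, e \in M -> f \in M -> e != f ->
          [disjoint [set e.1; e.2] & [set f.1; f.2]] &
        exists v, forall e, e \in M -> e.1 \in component H v].

Definition vertex_cover_of (H : rel T) (C S : {set T}) : Prop :=
  S \subset C /\
  forall x y, x \in C -> y \in C -> H x y -> (x \in S) || (y \in S).

Definition min_vertex_cover_of (H : rel T) (C S : {set T}) : Prop :=
  vertex_cover_of H C S /\
  forall S', vertex_cover_of H C S' -> #|S| <= #|S'|.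
End Defs.

(* Main.v *)
Require Import Defs.
From mathcomp Require Import all_boot zify.
From Stdlib Require Import Classical.
Set Implicit Arguments. Unset Strict Implicit. Unset Printing Implicit Defensive.

Section Konig.
Variable T : finType.
Variable E : rel T.

Definition nb (Bs X : {set T}) := [set b in Bs | [exists a in X, E a b]].

Definition is_matching (A Bs : {set T}) (M : {set T * T}) :=
  (forall e, e \in M -> [/\ e.1 \in A, e.2 \in Bs & E e.1 e.2]) /\
  (forall e f, e \in M -> f \in M -> (e.1 = f.1 \/ e.2 = f.2) -> e = f).

Lemma nb_sub Bs X : nb Bs X \subset Bs.
Proof. by apply/subsetP=> b; rewrite inE => /andP[]. Qed.

Lemma nb0 Bs : nb Bs set0 = set0.
Proof.
apply/setP=> b; rewrite !inE; case: (b \in Bs) => //=.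
by apply/existsP=> -[a]; rewrite inE.
Qed.

Lemma maximizer (A Bs : {set T}) : exists2 X : {set T}, X \subset A &
  forall Y : {set T}, Y \subset A -> #|Y| + #|nb Bs X| <= #|X| + #|nb Bs Y|.
Proof.
pose w (X : {set T}) := #|X| + #|Bs| - #|nb Bs X|.
case: (@arg_maxnP _ set0 (fun X : {set T} => X \subset A) w (sub0set A)) => X XA Xmax.
exists X => // Y YA; have := Xmax Y YA; rewrite /w.
have := subset_leq_card (nb_sub Bs X); have := subset_leq_card (nb_sub Bs Y).
lia.
Qed.


Lemma matching0 (A Bs : {set T}) : is_matching A Bs set0.
Proof. by split=> [e|e f]; rewrite inE. Qed.

Lemma matching_weak (A Bs A' Bs' : {set T}) M : is_matching A Bs M ->
  A \subset A' -> Bs \subset Bs' -> is_matching A' Bs' M.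
Proof.
move=> [h1 h2] /subsetP sA /subsetP sB; split=> // e eM.
by case: (h1 e eM) => a b c; split => //; [apply: sA | apply: sB].
Qed.

Lemma matching_union (A1 B1 A2 B2 : {set T}) M1 M2 :
  is_matching A1 B1 M1 -> is_matching A2 B2 M2 ->
  (forall x, x \in A1 -> x \in A2 -> False) ->
  (forall x, x \in B1 -> x \in B2 -> False) ->
  is_matching (A1 :|: A2) (B1 :|: B2) (M1 :|: M2) /\
  #|M1 :|: M2| = #|M1| + #|M2|.
Proof.
move=> [h1 i1] [h2 i2] dA dB; split; last first.
  rewrite cardsU; suff -> : M1 :&: M2 = set0 by rewrite cards0 subn0.
  apply/setP=> e; rewrite !inE; apply/negP => /andP[e1 e2].
  case: (h1 e e1) => a1 _ _; case: (h2 e e2) => a2 _ _; exact: (dA _ a1 a2).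
split.
  move=> e; rewrite inE => /orP[eM|eM].
    by case: (h1 e eM) => a b c; rewrite !inE a b.
  by case: (h2 e eM) => a b c; split => //; rewrite !inE ?a ?b ?orbT.
move=> e f; rewrite !inE => /orP[eM|eM] /orP[fM|fM] eq.
- exact: i1.
- case: (h1 e eM) => a b _; case: (h2 f fM) => a' b' _.
  case: eq => q; [case: (dA e.1 a); by rewrite q | case: (dB e.2 b); by rewrite q].
- case: (h2 e eM) => a b _; case: (h1 f fM) => a' b' _.
  case: eq => q; [case: (dA f.1 a'); by rewrite -q | case: (dB f.2 b'); by rewrite -q].
- exact: i2.
Qed.

Lemma trivial_case (A Bs : {set T}) : #|A| = 0 -> exists M, is_matching A Bs M /\
  exists2 X : {set T}, X \subset A & #|A| + #|nb Bs X| <= #|M| + #|X|.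
Proof.
move=> h; exists set0; split; first exact: matching0.
by exists set0; [exact: sub0set | rewrite nb0 cards0 h].
Qed.


Lemma defect_hall k : forall A Bs : {set T}, #|A| <= k ->
  exists M, is_matching A Bs M /\
  exists2 X : {set T}, X \subset A & #|A| + #|nb Bs X| <= #|M| + #|X|.
Proof.
elim: k => [|k IH] A Bs hA.
  by apply: trivial_case; lia.
case: (set_0Vmem A) => [A0|[a aA]].
  by apply: trivial_case; rewrite A0 cards0.
have [X0 X0A X0max] := maximizer A Bs.
have cA1 : #|A| = 1 + #|A :\ a| by rewrite (cardsD1 a A) aA.
case: (classic (exists X1 : {set T}, [/\ X1 \subset A, X1 != set0, X1 != A &
   forall Y : {set T}, Y \subset A -> #|Y| + #|nb Bs X1| <= #|X1| + #|nb Bs Y|])).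
  case=> X1 [X1A X1n0 X1nA X1max].
  have cX1 : #|X1| < #|A| by apply: proper_card; rewrite properEneq X1nA X1A.
  have cX1p : 0 < #|X1| by rewrite card_gt0.
  have cD : #|A :\: X1| = #|A| - #|X1| by rewrite cardsDS.
  have [M1 [M1m [Y1 Y1X1 h1]]] := IH X1 (nb Bs X1) ltac:(lia).
  have [M2 [M2m [Y2 Y2A h2]]] := IH (A :\: X1) (Bs :\: nb Bs X1) ltac:(lia).
  have e1 : nb (nb Bs X1) Y1 = nb Bs Y1.
    apply/setP=> b; rewrite /nb !inE; apply/idP/idP.
      by case/andP => /andP[-> _] ->.
    case/andP=> bB ex; rewrite bB ex /= andbT; case/existsP: ex => a1 /andP[a1Y Ea1].
    by apply/existsP; exists a1; rewrite (subsetP Y1X1 _ a1Y).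
  have e2 : nb (Bs :\: nb Bs X1) Y2 = nb Bs Y2 :\: nb Bs X1.
    by apply/setP=> b; rewrite /nb !inE andbA.
  rewrite e1 in h1; rewrite e2 in h2.
  have [Mm cM] := matching_union M1m M2m
    (fun x (h : x \in X1) h' => ltac:(move: h'; rewrite inE h; done))
    (fun x (h : x \in nb Bs X1) h' => ltac:(move: h'; rewrite inE h; done)).
  exists (M1 :|: M2); split.
    apply: (matching_weak Mm).
      by rewrite subUset X1A subsetDl.
    by rewrite subUset nb_sub subsetDl.
  exists (X1 :|: Y2).
    by rewrite subUset X1A (subset_trans Y2A (subsetDl _ _)).
  have cX : #|X1 :|: Y2| = #|X1| + #|Y2|.
    rewrite cardsU; suff -> : X1 :&: Y2 = set0 by rewrite cards0 subn0.
    apply/setP=> x; rewrite !inE; apply/negP=> /andP[x1 x2].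
    by move: (subsetP Y2A x x2); rewrite inE x1.
  have cN : #|nb Bs (X1 :|: Y2)| <= #|nb Bs X1| + #|nb Bs Y2 :\: nb Bs X1|.
    apply: leq_trans (_ : #|nb Bs X1 :|: (nb Bs Y2 :\: nb Bs X1)| <= _).
      apply: subset_leq_card; apply/subsetP=> b; rewrite /nb !inE.
      case/andP=> bB /existsP[x /andP[]]; rewrite inE => /orP[xX|xY] Exb.
        by rewrite bB /=; apply/orP; left; apply/existsP; exists x; rewrite xX.
      rewrite bB /=; case: [exists a0 in X1, E a0 b] => //=.
      by apply/existsP; exists x; rewrite xY.
    by rewrite cardsU leq_subr.
  have := X1max Y1 (subset_trans Y1X1 X1A).
  rewrite cM cX; lia.
move=> nomax.
have nm : forall Y : {set T}, Y \subset A -> Y != set0 -> Y != A ->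
    exists2 Z : {set T}, Z \subset A & #|Y| + #|nb Bs Z| < #|Z| + #|nb Bs Y|.
  move=> Y YA Y0 YnA; apply: NNPP => H; apply: nomax; exists Y; split=> // Z ZA.
  rewrite leqNgt; apply/negP => hlt; apply: H; by exists Z.
have X0c : X0 = set0 \/ X0 = A.
  case: (eqVneq X0 set0) => [->|n0]; first by left.
  case: (eqVneq X0 A) => [->|nA]; first by right.
  by case: nomax; exists X0.
have AsubA : A :\ a \subset A by apply: subsetDl.
have aNAa : forall Y : {set T}, Y \subset A :\ a -> Y != A.
  move=> Y YA; apply/eqP=> YA'; move: (subsetP YA a); rewrite YA' aA !inE eqxx.
  by move=> /(_ isT).
case: (ltnP #|nb Bs A| #|A|) => hNA.
  have X0A' : X0 = A.
    case: X0c => // X00; have := X0max A (subxx A); rewrite X00 nb0 cards0; lia.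
  have [M' [M'm [Y YA h]]] := IH (A :\ a) Bs ltac:(lia).
  exists M'; split; first exact: (matching_weak M'm AsubA (subxx _)).
  exists A => //.
  case: (eqVneq Y set0) => [Y0|Yn0].
    move: h; rewrite Y0 cards0; lia.
  have [Z ZA hz] := nm Y (subset_trans YA AsubA) Yn0 (aNAa Y YA).
  have := X0max Z ZA; rewrite X0A'; lia.
have hall : forall Z : {set T}, Z \subset A -> #|Z| <= #|nb Bs Z|.
  move=> Z ZA; have := X0max Z ZA.
  by case: X0c => ->; rewrite ?nb0 ?cards0; lia.
have strict : forall Y : {set T}, Y \subset A -> Y != set0 -> Y != A ->
    #|Y| < #|nb Bs Y|.
  move=> Y YA Y0 YnA; have [Z ZA hz] := nm Y YA Y0 YnA; have := hall Z ZA; lia.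
have : 0 < #|nb Bs [set a]|.
  by have := hall [set a]; rewrite sub1set cards1 => /(_ aA).
case/card_gt0P => b; rewrite inE => /andP[bB /existsP[a' /andP[]]].
rewrite inE => /eqP -> Eab.
have [M' [M'm [Y YA h]]] := IH (A :\ a) (Bs :\ b) ltac:(lia).
have hM' : #|A| <= 1 + #|M'|.
  case: (eqVneq Y set0) => [Y0|Yn0].
    move: h; rewrite Y0 cards0; lia.
  have := strict Y (subset_trans YA AsubA) Yn0 (aNAa Y YA).
  have eY : nb (Bs :\ b) Y = nb Bs Y :\ b.
    by apply/setP=> c; rewrite /nb !inE andbA.
  rewrite eY in h; have := cardsD1 b (nb Bs Y); case: (b \in nb Bs Y); lia.
have abM' : (a, b) \notin M'.
  apply/negP=> abM; case: M'm => h1 _; case: (h1 _ abM) => /=.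
  by rewrite !inE eqxx.
exists ((a, b) |: M'); split.
  case: M'm => h1 i1; split.
    move=> e; rewrite in_setU1 => /orP[/eqP -> /=|eM]; first by split.
    case: (h1 e eM) => x y z; split => //.
      by move: x; rewrite inE => /andP[].
    by move: y; rewrite inE => /andP[].
  move=> e f; rewrite !in_setU1 => /orP[/eqP ->|eM] /orP[/eqP ->|fM] //= eq.
  - case: (h1 f fM) => x y _; case: eq => q; move: x y; rewrite -q !inE eqxx //.
  - case: (h1 e eM) => x y _; case: eq => q; move: x y; rewrite q !inE eqxx //.
  - exact: i1.
exists set0; first exact: sub0set.
rewrite nb0 cards0 cardsU1 abM'; lia.
Qed.


Lemma konig (A Bs : {set T}) : exists M, is_matching A Bs M /\
  exists K : {set T}, [/\ K \subset A :|: Bs,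
    (forall a b, a \in A -> b \in Bs -> E a b -> (a \in K) || (b \in K)) &
    #|K| <= #|M|].
Proof.
have [M [Mm [X XA h]]] := @defect_hall #|A| A Bs (leqnn _).
exists M; split => //; exists ((A :\: X) :|: nb Bs X); split.
- by rewrite subUset (subset_trans (subsetDl _ _) (subsetUl _ _))
     (subset_trans (nb_sub _ _) (subsetUr _ _)).
- move=> a b aA bB Eab; case: (boolP (a \in X)) => aX.
    have bN : b \in nb Bs X.
      by rewrite /nb inE bB /=; apply/existsP; exists a; rewrite aX.
    by apply/orP; right; rewrite in_setU bN orbT.
  by apply/orP; left; rewrite in_setU in_setD aX aA.
- have := subset_leq_card XA; rewrite cardsU cardsDS //; move: h; lia.
Qed.

End Konig.

Lemma subcard (T : finType) (M : {set T}) n : n <= #|M| ->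
  exists2 M' : {set T}, M' \subset M & #|M'| = n.
Proof.
move=> h; have [k hk] : exists k, #|M| = n + k by exists (#|M| - n); lia.
elim: k M hk {h} => [|k IH] M hk; first by exists M => //; rewrite hk addn0.
have : 0 < #|M| by lia.
case/card_gt0P => x xM.
have := cardsD1 x M; rewrite xM => hc.
have [M' M'M cM'] := IH (M :\ x) ltac:(lia).
by exists M' => //; apply: subset_trans M'M (subsetDl _ _).
Qed.

Lemma interc (T : finType) (X Y W : {set T}) : X \subset W -> Y \subset W ->
  #|X| + #|Y| <= #|X :&: Y| + #|W|.
Proof.
move=> XW YW; have := cardsU X Y; have := subset_leq_card (subsetIl X Y).
have : #|X :|: Y| <= #|W| by apply: subset_leq_card; rewrite subUset XW YW.
lia.
Qed.

Theorem lemma3p2 (m n : nat) (T : finType) (adj : rel T) (V1 V2 : {set T})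
  (col : T -> T -> bool) (B S : {set T}) :
  0 < n -> n < m ->
  bipartite_graph adj V1 V2 ->
  #|V1| = m + n - 1 -> #|V2| = m + n - 1 ->
  (forall x, 3 * (m + n - 1) < 4 * deg adj x) ->
  coloring adj col ->
  ~ connected_matching (blue_rel adj col) n ->
  is_component (blue_rel adj col) B ->
  (forall v, #|component (blue_rel adj col) v| <= #|B|) ->
  n <= #|B :&: V1| -> n <= #|B :&: V2| ->
  min_vertex_cover_of (blue_rel adj col) B S ->
  exists v, B :\: S \subset component (red_rel adj col) v.
Proof.
move=> n0 nm [symA irrA disj cov bip] c1 c2 degH colH noCM [v0 Bdef] Bmax
  hB1 hB2 [[SB Scov] Smin].
set bl := blue_rel adj col; set rd := red_rel adj col.
have [N hN] : exists N, m + n - 1 = N by eexists.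
have hN1 : N + 1 = m + n by lia.
rewrite hN in c1 c2 degH; clear hN.
have blS : symmetric bl.
  move=> x y; rewrite /bl /blue_rel /= (symA y x).
  by case h: (adj x y) => //=; rewrite (colH _ _ h).
have rdS : symmetric rd.
  move=> x y; rewrite /rd /red_rel /= (symA y x).
  by case h: (adj x y) => //=; rewrite (colH _ _ h).
have side x : (x \in V1) || (x \in V2) by rewrite -in_setU cov inE.
have not12 x : x \in V1 -> x \in V2 -> False.
  by move=> h1 h2; move: (disjointFr disj h1); rewrite h2.
have nb1 x z : x \in V1 -> adj x z -> z \in V2.
  move=> x1 axz; case/orP: (bip x z axz) => /andP[] // x2; case: (not12 x x1 x2).
have nb2 x z : x \in V2 -> adj x z -> z \in V1.
  move=> x2 axz; case/orP: (bip x z axz) => /andP[] // x1; case: (not12 x x1 x2).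
have inB x y : x \in B -> bl x y -> y \in B.
  by rewrite Bdef !inE => h1 h2; apply: connect_trans h1 (connect1 h2).
have cardsplit (Z : {set T}) : #|Z :&: V1| + #|Z :&: V2| = #|Z|.
  rewrite -(cardsID V1 Z); congr (_ + _); apply: eq_card => z; rewrite !inE.
  case: (boolP (z \in V1)) => z1 /=.
    by case: (boolP (z \in V2)) => z2; [case: (not12 z z1 z2) | rewrite andbF].
  have z2 : z \in V2 by have := side z; rewrite (negbTE z1).
  by rewrite z2 andbT.
have Sle : #|S| < n.
  have [M [[Mm Mi] [K [KAB Kcov KM]]]] := konig bl (B :&: V1) (B :&: V2).
  have Mlt : #|M| < n.
    rewrite ltnNge; apply/negP => hn; have [M' M'M cM'] := subcard hn.
    apply: noCM; exists M'; split => //.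
    - by move=> e eM; case: (Mm e (subsetP M'M e eM)).
    - move=> e f eM fM ef; rewrite -setI_eq0; apply/eqP/setP => z; rewrite !inE.
      have [e1 e2 _] := Mm e (subsetP M'M e eM).
      have [f1 f2 _] := Mm f (subsetP M'M f fM).
      move: e1 e2 f1 f2; rewrite !inE => /andP[_ e1] /andP[_ e2] /andP[_ f1] /andP[_ f2].
      apply/negP => /andP[/orP[]/eqP-> /orP[]/eqP h].
      + by move/eqP: ef; apply; apply: Mi; [exact: (subsetP M'M) | exact: (subsetP M'M) | left].
      + by case: (not12 _ e1); rewrite h.
      + by case: (not12 _ f1); rewrite -h.
      + by move/eqP: ef; apply; apply: Mi; [exact: (subsetP M'M) | exact: (subsetP M'M) | right].
    - exists v0 => e eM; have [e1 _ _] := Mm e (subsetP M'M e eM).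
      by move: e1; rewrite inE -Bdef => /andP[].
  have KB : vertex_cover_of bl B K.
    split.
      apply: subset_trans KAB _; rewrite subUset; apply/andP; split; exact: subsetIl.
    move=> x y xB yB bxy; have axy : adj x y by move: bxy => /andP[].
    case/orP: (bip x y axy) => /andP[x1 y2].
      by apply: Kcov; rewrite ?inE ?xB ?yB ?x1 ?y2.
    by rewrite orbC; apply: Kcov; rewrite ?inE ?xB ?yB ?x1 ?y2 // blS.
  have := Smin K KB; lia.
have F1 x y : x \in B :\: S -> adj x y -> y \notin S -> rd x y.
  move=> xBS axy yS; rewrite /rd /red_rel /= axy /=.
  case c: (col x y) => //.
  have bxy : bl x y by rewrite /bl /blue_rel /= axy c.
  move: xBS; rewrite inE => /andP[xS xB].
  have yB := inB x y xB bxy.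
  by have := Scov x y xB yB bxy; rewrite (negbTE xS) (negbTE yS).
have csym := sym_connect_sym rdS.
have F2 (U W : {set T}) : (forall x z, x \in U -> adj x z -> z \in W) ->
    #|W| = N -> forall x y, x \in B :\: S -> x \in U ->
    y \in B :\: S -> y \in U -> connect rd x y.
  move=> hUW cW x y xBS xU yBS yU.
  set Nx := [set z | adj x z]; set Ny := [set z | adj y z].
  have NxW : Nx \subset W by apply/subsetP => z; rewrite inE; apply: hUW.
  have NyW : Ny \subset W by apply/subsetP => z; rewrite inE; apply: hUW.
  have h1 := interc NxW NyW.
  have := cardsID S (Nx :&: Ny); have := subset_leq_card (subsetIl S (Nx :&: Ny)).
  rewrite setIC.
  have := degH x; have := degH y; rewrite /deg -/Nx -/Ny => dx dy h2 h3.
  have : 0 < #|Nx :&: Ny :\: S| by clear -h1 h2 h3 dx dy Sle nm hN1 cW; lia.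
  case/card_gt0P => z; rewrite !inE => /andP[zS /andP[axz ayz]].
  apply: connect_trans (connect1 (F1 x z xBS axz zS)) _.
  by apply: connect1; rewrite rdS; apply: F1.
have F21 := F2 V1 V2 nb1 c2.
have F22 := F2 V2 V1 nb2 c1.
have F3 x y : x \in B :\: S -> x \in V1 -> y \in B :\: S -> y \in V2 ->
    connect rd x y.
  move=> xBS x1 yBS y2.
  case: (classic (exists x' y', [/\ x' \in B :\: S, x' \in V1, y' \in B :\: S,
      y' \in V2 & adj x' y'])).
    case=> x' [y' [h1 h2 h3 h4 h5]].
    apply: connect_trans (F21 x x' xBS x1 h1 h2) _.
    apply: connect_trans (connect1 (F1 x' y' h1 h5 _)) (F22 y' y h3 h4 yBS y2).
    by move: h3; rewrite inE => /andP[].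
  move=> noE.
  set Nx := [set z | adj x z]; set Ny := [set z | adj y z].
  have NxV2 : Nx \subset V2 by apply/subsetP => z; rewrite inE; apply: nb1.
  have NyV1 : Ny \subset V1 by apply/subsetP => z; rewrite inE; apply: nb2.
  have dx : 3 * N < 4 * #|Nx| by apply: degH.
  have dy : 3 * N < 4 * #|Ny| by apply: degH.
  have dxN := subset_leq_card NxV2; have dyN := subset_leq_card NyV1.
  have X1sub : (B :\: S) :&: V1 \subset V1 :\: Ny.
    apply/subsetP => z; rewrite !inE => /andP[zBS z1]; rewrite z1 andbT.
    apply/negP => ayz; apply: noE; exists z, y; split => //; first by rewrite inE.
    by rewrite symA.
  have X2sub : (B :\: S) :&: V2 \subset V2 :\: Nx.
    apply/subsetP => z; rewrite !inE => /andP[zBS z2]; rewrite z2 andbT.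
    by apply/negP => axz; apply: noE; exists x, z; split => //; rewrite inE.
  have cX1 := subset_leq_card X1sub; have cX2 := subset_leq_card X2sub.
  rewrite cardsDS // in cX1; rewrite cardsDS // in cX2.
  have cB1 : #|B :&: V1| <= #|(B :\: S) :&: V1| + #|S :&: V1|.
    apply: leq_trans (_ : #|((B :\: S) :&: V1) :|: (S :&: V1)| <= _).
      apply: subset_leq_card; apply/subsetP => z; rewrite !inE.
      by case: (z \in S); case: (z \in B); case: (z \in V1).
    by rewrite cardsU leq_subr.
  have cB2 : #|B :&: V2| <= #|(B :\: S) :&: V2| + #|S :&: V2|.
    apply: leq_trans (_ : #|((B :\: S) :&: V2) :|: (S :&: V2)| <= _).
      apply: subset_leq_card; apply/subsetP => z; rewrite !inE.
      by case: (z \in S); case: (z \in B); case: (z \in V2).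
    by rewrite cardsU leq_subr.
  have cS := cardsplit S; have cB := cardsplit B.
  set P := Nx :\: S; set Q := Ny :\: S.
  have cP : #|Nx| <= #|P| + #|S :&: V2|.
    rewrite -(cardsID S Nx) addnC leq_add2l; apply: subset_leq_card.
    by apply/subsetP => z; rewrite inE => /andP[zN zS]; rewrite inE zS (subsetP NxV2 z zN).
  have cQ : #|Ny| <= #|Q| + #|S :&: V1|.
    rewrite -(cardsID S Ny) addnC leq_add2l; apply: subset_leq_card.
    by apply/subsetP => z; rewrite inE => /andP[zN zS]; rewrite inE zS (subsetP NyV1 z zN).
  have PV2 : P \subset V2 by apply: subset_trans (subsetDl _ _) NxV2.
  have QV1 : Q \subset V1 by apply: subset_trans (subsetDl _ _) NyV1.
  case: (classic (exists p q, [/\ p \in P, q \in Q & rd p q])).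
    case=> p [q [pP qQ rpq]].
    move: (pP) (qQ); rewrite !inE => /andP[pS axp] /andP[qS ayq].
    apply: connect_trans (connect1 (F1 x p xBS axp pS)) _.
    apply: connect_trans (connect1 rpq) _.
    by apply: connect1; rewrite rdS; apply: F1.
  move=> noR.
  have allB p q : p \in P -> q \in Q -> adj p q -> bl p q.
    move=> pP qQ apq; rewrite /bl /blue_rel /= apq /=; apply/negP => c.
    by apply: noR; exists p, q; split => //; rewrite /rd /red_rel /= apq c.
  have : 0 < #|Q| by clear -cQ dy cS Sle hN1 nm; lia.
  case/card_gt0P => q0 q0Q.
  have Qin q : q \in Q -> connect bl q0 q.
    move=> qQ.
    set Nq := [set z | adj q z]; set Nq0 := [set z | adj q0 z].
    have NqV2 : Nq \subset V2.
      by apply/subsetP => z; rewrite inE; apply: nb1; apply: (subsetP QV1).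
    have Nq0V2 : Nq0 \subset V2.
      by apply/subsetP => z; rewrite inE; apply: nb1; apply: (subsetP QV1).
    have dq : 3 * N < 4 * #|Nq| by apply: degH.
    have dq0 : 3 * N < 4 * #|Nq0| by apply: degH.
    have i1 := interc NqV2 Nq0V2.
    have i2 := interc PV2 (subset_trans (subsetIl _ _) NqV2 : Nq :&: Nq0 \subset V2).
    have : 0 < #|P :&: (Nq :&: Nq0)| by clear -i1 i2 dq dq0 cP dx dy hB1 cB1 cX1 c1 c2 dyN cS Sle hN1 nm; lia.
    case/card_gt0P => p; rewrite in_setI => /andP[pP].
    rewrite in_setI !inE => /andP[aqp aq0p].
    apply: connect_trans (connect1 (_ : bl q0 p)) (connect1 (_ : bl p q)).
      by rewrite blS; apply: allB => //; rewrite symA.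
    by apply: allB => //; rewrite symA.
  have Pin p : p \in P -> connect bl q0 p.
    move=> pP; set Np := [set z | adj p z].
    have NpV1 : Np \subset V1.
      by apply/subsetP => z; rewrite inE; apply: nb2; apply: (subsetP PV2).
    have dp : 3 * N < 4 * #|Np| by apply: degH.
    have i1 := interc QV1 NpV1.
    have : 0 < #|Q :&: Np| by clear -i1 dp cQ dy dx hB2 cB2 cX2 c1 c2 dxN cS Sle hN1 nm; lia.
    case/card_gt0P => q; rewrite in_setI => /andP[qQ]; rewrite inE => apq.
    apply: connect_trans (Qin q qQ) (connect1 _).
    by rewrite blS; apply: allB.
  have cD : #|P :|: Q| <= #|component bl q0|.
    apply: subset_leq_card; apply/subsetP => z; rewrite in_setU => /orP[zP|zQ].
      by rewrite inE; apply: Pin.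
    by rewrite inE; apply: Qin.
  have cPQ : #|P :|: Q| = #|P| + #|Q|.
    rewrite cardsU; suff -> : P :&: Q = set0 by rewrite cards0 subn0.
    apply/setP => z; rewrite inE [in RHS]inE; apply/negP => /andP[zP zQ].
    exact: (not12 z (subsetP QV1 z zQ) (subsetP PV2 z zP)).
  exfalso; have hBm : #|component bl q0| <= #|B| := Bmax q0; clear -hBm cD cPQ cP cQ cB1 cB2 cX1 cX2 cB cS Sle dx dy c1 c2 dxN dyN hN1 nm; lia.
case: (set_0Vmem (B :\: S)) => [E0|[w wBS]].
  by exists v0; rewrite E0 sub0set.
exists w; apply/subsetP => u uBS; rewrite inE.
case/orP: (side w) => w1; case/orP: (side u) => u1.
- exact: F21.
- exact: F3.
- by rewrite csym; apply: F3.
- exact: F22.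
Qed.
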